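(* Let $T$ be a nonempty rooted tree, $G=U(T)$ its underlying graph, and $U\colon X^T\to X^G$ the simplicial map sending $(F;L_0\supseteq\cdots\supseteq L_n)$ to $(U(F);L_0\setminus L_1,\dots,L_{n-1}\setminus L_n)$. Then: (1) if $T$ is labelled, $U$ is CULF if and only if $T$ has exactly one vertex; (2) if $T$ is unlabelled (planar or non-planar), $U$ is CULF if and only if $T$ has at most one edge.
   Context: Rooted trees and $X^T$: A rooted tree $T$ is a finite tree with a distinguished root vertex; its vertex set is partially ordered by $v\le w$ iff $v$ lies on the path from the root to $w$; a planar rooted tree additionally carries a total order on the upward edges at each vertex. A rooted forest is a disjoint union of rooted trees. For a vertex subset $S$, the subforest spanned by $S$ ($H|_S$) has vertex set $S$, the edges with both endpoints in $S$, and the induced structure. A subset $L$ defines a lower subforest if $w\in L$, $v\le w$ imply $v\in L$. For $n\ge1$ a layering of $n-1$ cuts of a forest $F$ is a chain $V(F)=L_0\supseteq\cdots\supseteq L_n=\varnothing$ of subsets each defining a lower subforest. An admissible subforest of $T$ is the subforest spanned by $L_i\setminus L_j$ ($i\le j$) for a layering of $T$. $X^T_0$ is a point; $X^T_n$ ($n\ge1$) is the set of pairs $(H;L_0\supseteq\cdots\supseteq L_n)$ with $H$ admissible and $L_\bullet$ a layering of $H$; for $n\ge2$, $d_0(H;L_\bullet)=(H|_{L_1};L_1\supseteq\cdots\supseteq L_n)$, $d_n(H;L_\bullet)=(H|_{L_0\setminus L_{n-1}};L_0\setminus L_{n-1}\supseteq\cdots\supseteq L_{n-1}\setminus L_{n-1})$,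 $d_i$ ($0<i<n$) deletes $L_i$, and $s_i$ repeats $L_i$. In the labelled version vertices are distinguishable; in the unlabelled versions one takes isomorphism classes of such pairs under isomorphisms of rooted forests (planar-structure preserving in the planar case) carrying each $L_i$ onto $L'_i$. Graphs and $X^G$: For a finite graph $G$, a subgraph is a vertex subset with a set of edges having endpoints in it. $X^G_0=\{\varnothing\}$; $X^G_1$ is the set of subgraphs of $G$; $X^G_n$ ($n\ge1$) is the set of tuples $(H;S_1,\dots,S_n)$ with $H$ a subgraph and $S_1,\dots,S_n$ a partition of $V(H)$ into possibly empty disjoint sets; $d_0$ and $d_n$ delete $S_1$, resp. $S_n$, together with these vertices and incident edges from $H$; $d_i$ ($1\le i\le n-1$) merges $S_i$ and $S_{i+1}$; $s_i$ inserts $\varnothing$ after $S_i$. For unlabelled $G$ one takes isomorphism classes of tuples under graph isomorphisms preserving the parts. A map of simplicial sets $f\colon X\to Y$ is CULF (conservative with unique lifting of factorizations) if for all $n$ the commutative squares formed by $f_n,f_{n+1}$ and the degeneracies $s_j\colon X_n\to X_{n+1}$, $s_j\colon Y_n\to Y_{n+1}$ ($0\le j\le n$), and those formed by $f_n,f_{n-1}$ and the inner faces $d_i$ ($0<i<n$), are pullbacks of sets. *)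

(* Defs.v *)
From mathcomp Require Import all_boot.
Set Implicit Arguments. Unset Strict Implicit. Unset Printing Implicit Defensive.

Section Trees.
Variable V : finType.
(* A rooted tree on vertex set V is given by its parent function:
   par v = Some p iff p is the parent of v; par r = None iff r is the root. *)
Variable par : V -> option V.

Definition is_rooted_tree : Prop :=
  (exists! r : V, par r = None) /\
  (forall v : V, exists k, iter k (fun o => obind par o) (Some v) = None).

(* Number of edges of T (edges correspond to non-root vertices, edge {v, par v}). *)
Definition nedges : nat := #|[set v : V | par v != None]|.

(* The rooted forest H = T|_S spanned by S: parent inside H (a vertex whose
   T-parent is not in S becomes a root of H). *)
Definition parH (S : {set V}) (v : V) : option V :=
  match par v with Some p => if p \in S then Some p else None | None => None end.

Definition leH (S : {set V}) (v w : V) : Prop :=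
  exists k, iter k (fun o => obind (parH S) o) (Some w) = Some v.

Definition lowerH (S L : {set V}) : Prop :=
  forall v w, w \in L -> leH S v w -> v \in L.

(* a layering L_0 ⊇ ... ⊇ L_n (n = size L - 1 >= 1) of the forest T|_S *)
Definition layering (S : {set V}) (L : seq {set V}) : Prop :=
  [/\ 2 <= size L, nth set0 L 0 = S, nth set0 L (size L).-1 = set0,
      (forall i, i.+1 < size L -> nth set0 L i.+1 \subset nth set0 L i) &
      (forall i, i < size L -> lowerH S (nth set0 L i))].

(* admissible subforests (identified with their vertex sets) *)
Definition admissible (S : {set V}) : Prop :=
  exists L, layering setT L /\
    exists i j, [/\ i <= j, j < size L & S = nth set0 L i :\: nth set0 L j].

Record ssetP (A : Type) := SSetP {
  scell : nat -> A -> Prop;            (* x is a representative of an n-simplex *)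
  seqv  : nat -> A -> A -> Prop;       (* two representatives give the same n-simplex *)
  sface : nat -> nat -> A -> A;        (* sface n i : X_n -> X_{n-1} *)
  sdeg  : nat -> nat -> A -> A }.      (* sdeg n j : X_n -> X_{n+1} *)

(* CULF: degeneracy squares and inner-face squares are pullbacks of sets
   (of equivalence classes). *)
Definition CULF (A B : Type) (X : ssetP A) (Y : ssetP B) (f : A -> B) : Prop :=
  (forall n j, j <= n -> forall x' y, scell X n.+1 x' -> scell Y n y ->
     seqv Y n.+1 (f x') (sdeg Y n j y) ->
     exists x, [/\ scell X n x, seqv X n.+1 (sdeg X n j x) x', seqv Y n (f x) y &
       forall z, scell X n z -> seqv X n.+1 (sdeg X n j z) x' -> seqv Y n (f z) y ->
         seqv X n z x]) /\
  (forall n i, 0 < i < n -> forall x y, scell X n.-1 x -> scell Y n y ->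
     seqv Y n.-1 (f x) (sface Y n i y) ->
     exists x', [/\ scell X n x', seqv X n.-1 (sface X n i x') x, seqv Y n (f x') y &
       forall z, scell X n z -> seqv X n.-1 (sface X n i z) x -> seqv Y n (f z) y ->
         seqv X n z x']).

(* simplex representative: (vertex set of H, [:: L_0; ...; L_n]) *)
Definition Tsimp := ({set V} * seq {set V})%type.

Definition XT_cell (n : nat) (x : Tsimp) : Prop :=
  if n is 0 then x = (set0, [:: set0])
  else [/\ admissible x.1, size x.2 = n.+1 & layering x.1 x.2].

Definition XT_face (n i : nat) (x : Tsimp) : Tsimp :=
  let: (S0, L) := x in
  if i == 0 then (nth set0 L 1, behead L)
  else if i == n then
    let B := nth set0 L n.-1 in (S0 :\: B, [seq A :\: B | A <- take n L])
  else (S0, take i L ++ drop i.+1 L).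

Definition XT_deg (n j : nat) (x : Tsimp) : Tsimp :=
  let: (S0, L) := x in (S0, take j.+1 L ++ drop j L).

Definition iso_forest (x x' : Tsimp) (phi : V -> V) : Prop :=
  [/\ {in x.1 &, injective phi}, phi @: x.1 = x'.1,
      (forall v, v \in x.1 -> parH x'.1 (phi v) = omap phi (parH x.1 v)),
      size x.2 = size x'.2 &
      (forall i, phi @: nth set0 x.2 i = nth set0 x'.2 i)].

Definition planar_structure (po : V -> rel V) : Prop :=
  forall v, [/\ (forall c, par c = Some v -> ~~ po v c c),
    (forall a b c, par a = Some v -> par b = Some v -> par c = Some v ->
       po v a b -> po v b c -> po v a c) &
    (forall a b, par a = Some v -> par b = Some v -> a != b -> po v a b || po v b a)].

Definition preserves_planar (po : V -> rel V) (x : Tsimp) (phi : V -> V) : Prop :=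
  forall v c1 c2, v \in x.1 -> c1 \in x.1 -> c2 \in x.1 ->
    parH x.1 c1 = Some v -> parH x.1 c2 = Some v ->
    po v c1 c2 = po (phi v) (phi c1) (phi c2).

Definition XT_lab : ssetP Tsimp :=
  SSetP XT_cell (fun _ x y => x = y) XT_face XT_deg.
Definition XT_unl : ssetP Tsimp :=
  SSetP XT_cell (fun _ x y => exists phi, iso_forest x y phi) XT_face XT_deg.
Definition XT_pl (po : V -> rel V) : ssetP Tsimp :=
  SSetP XT_cell (fun _ x y => exists phi, iso_forest x y phi /\ preserves_planar po x phi)
    XT_face XT_deg.

(* The edges of G = U(T) are the {v, par v}; the edge {v, par v} is encoded by
   the non-root vertex v.  A simplex representative is ((W, E), [:: S_1; ...; S_n])
   with (W, E) a subgraph of G. *)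
Definition Gsimp := ({set V} * {set V} * seq {set V})%type.

Definition subgraph (W E : {set V}) : Prop :=
  forall e, e \in E -> e \in W /\ exists p, par e = Some p /\ p \in W.

Definition XG_cell (n : nat) (x : Gsimp) : Prop :=
  let: (W, E, P) := x in
  [/\ size P = n, subgraph W E,
      (forall i j, i < j -> j < n -> [disjoint nth set0 P i & nth set0 P j]) &
      W = \bigcup_(A <- P) A].

Definition cutE (A E : {set V}) : {set V} :=
  [set e in E | (e \notin A) && (if par e is Some p then p \notin A else true)].

Definition XG_face (n i : nat) (x : Gsimp) : Gsimp :=
  let: (W, E, P) := x in
  if i == 0 then let A := nth set0 P 0 in (W :\: A, cutE A E, behead P)
  else if i == n then let A := nth set0 P n.-1 in (W :\: A, cutE A E, take n.-1 P)
  else (W, E, take i.-1 P ++ (nth set0 P i.-1 :|: nth set0 P i) :: drop i.+1 P).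

Definition XG_deg (n j : nat) (x : Gsimp) : Gsimp :=
  let: (W, E, P) := x in (W, E, take j P ++ set0 :: drop j P).

Definition adjE (E : {set V}) (u v : V) : bool :=
  ((u \in E) && (par u == Some v)) || ((v \in E) && (par v == Some u)).

Definition iso_graph (x x' : Gsimp) (phi : V -> V) : Prop :=
  let: (W, E, P) := x in let: (W', E', P') := x' in
  [/\ {in W &, injective phi}, phi @: W = W',
      (forall u v, u \in W -> v \in W -> adjE E u v = adjE E' (phi u) (phi v)),
      size P = size P' &
      (forall i, phi @: nth set0 P i = nth set0 P' i)].

Definition XG_lab : ssetP Gsimp :=
  SSetP XG_cell (fun _ x y => x = y) XG_face XG_deg.
Definition XG_unl : ssetP Gsimp :=
  SSetP XG_cell (fun _ x y => exists phi, iso_graph x y phi) XG_face XG_deg.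

Definition Umap (x : Tsimp) : Gsimp :=
  let: (S0, L) := x in
  (S0, [set v in S0 | if par v is Some p then p \in S0 else false],
   [seq nth set0 L i :\: nth set0 L i.+1 | i <- iota 0 (size L).-1]).

End Trees.

(* Main.v *)
Require Import Defs.
From mathcomp Require Import all_boot.
From mathcomp Require Import zify.
From Stdlib Require Import FunctionalExtensionality PropExtensionality.
Set Implicit Arguments. Unset Strict Implicit. Unset Printing Implicit Defensive.

Section Lists.
Variable T : Type.
Implicit Types s : seq T.

Lemma nth_del (x0 : T) s j k : j <= size s ->
  nth x0 (take j s ++ drop j.+1 s) k = nth x0 s (if k < j then k else k.+1).
Proof.
move=> hj; rewrite nth_cat size_takel //.
case: ifP => hk; first by rewrite nth_take.
by rewrite nth_drop; congr nth; move/negbT: hk; rewrite -leqNgt => hk; rewrite addSn subnKC.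
Qed.

Lemma nth_ins (x0 : T) s a j b k : j <= size s ->
  nth x0 (take j s ++ a :: drop b s) k =
  (if k < j then nth x0 s k else if k == j then a else nth x0 s (b + (k - j.+1))).
Proof.
move=> hj; rewrite nth_cat size_takel //.
case: ifP => hk; first by rewrite nth_take.
move/negbT: hk; rewrite -leqNgt => hk.
case: eqP => [->|hne]; first by rewrite subnn.
have h : 0 < k - j by rewrite subn_gt0 ltn_neqAle eq_sym hk andbT; apply/eqP.
by case E: (k - j) h => [|m] //= _; rewrite nth_drop; congr nth; congr addn; rewrite subnS E.
Qed.

Lemma nth_dup (x0 : T) s j k : j < size s ->
  nth x0 (take j.+1 s ++ drop j s) k = nth x0 s (if k <= j then k else k.-1).
Proof.
move=> hj; rewrite nth_cat size_takel // ltnS.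
case: ifP => hk; first by rewrite nth_take.
rewrite nth_drop; congr nth; move/negbT: hk; rewrite -ltnNge => hk.
by case: k hk => // k hk /=; rewrite subSS addnC subnK.
Qed.

End Lists.

Section Tree.
Variable V : finType.
Variable par : V -> option V.

Definition Eind (S : {set V}) := [set v in S | if par v is Some p then p \in S else false].
Definition pt (L : seq {set V}) k := nth set0 L k :\: nth set0 L k.+1.
Definition parts (L : seq {set V}) := [seq nth set0 L i :\: nth set0 L i.+1 | i <- iota 0 (size L).-1].

Lemma UmapE S L : Umap par (S, L) = (S, Eind S, parts L).
Proof. by []. Qed.

Lemma size_parts L : size (parts L) = (size L).-1.
Proof. by rewrite size_map size_iota. Qed.

Lemma nth_parts L k : nth set0 L (size L).-1 = set0 -> nth set0 (parts L) k = pt L k.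
Proof.
move=> hl; case: (ltnP k (size L).-1) => hk.
  by rewrite (nth_map 0) ?size_iota // nth_iota.
rewrite nth_default ?size_parts // /pt.
suff -> : nth set0 L k = set0 by rewrite set0D.
case: (ltnP k (size L)) => hk2; last by rewrite nth_default.
have -> : k = (size L).-1 by apply/eqP; rewrite eqn_leq hk -ltnS (ltn_predK hk2) hk2.
exact: hl.
Qed.

Lemma lay_chain S L i j : layering par S L -> i <= j -> nth set0 L j \subset nth set0 L i.
Proof.
case=> _ _ _ hc _; elim: j => [|j IH]; first by rewrite leqn0 => /eqP ->.
rewrite leq_eqVlt => /orP [/eqP -> //| hij].
apply: subset_trans (IH hij).
case: (ltnP j.+1 (size L)) => h; first exact: hc.
by rewrite nth_default // sub0set.
Qed.

Lemma lay_sub S L k : layering par S L -> nth set0 L k \subset S.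
Proof. move=> hL; case: (hL) => _ h0 _ _ _; rewrite -h0; exact: (lay_chain hL (leq0n k)). Qed.

Lemma lay_last S L k : layering par S L -> (size L).-1 <= k -> nth set0 L k = set0.
Proof.
move=> hL hk; case: (hL) => _ _ hl _ _.
by have := lay_chain hL hk; rewrite hl subset0 => /eqP.
Qed.

Lemma pt_sub S L k : layering par S L -> pt L k \subset nth set0 L k.
Proof. by move=> _; rewrite /pt subsetDl. Qed.

Lemma lay_split S L k : layering par S L -> nth set0 L k = pt L k :|: nth set0 L k.+1.
Proof.
move=> hL; have /subsetP h := lay_chain (i:=k) (j:=k.+1) hL (leqnSn _).
apply/setP=> v; rewrite /pt !inE; case hv: (v \in nth set0 L k.+1) => //=.
by rewrite (h _ hv).
by rewrite orbF.
Qed.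

Lemma lay_eq S L L' : layering par S L -> layering par S L' -> size L = size L' ->
  parts L = parts L' -> L = L'.
Proof.
move=> hL hL' hs hp.
have hpt k : pt L k = pt L' k.
  case: (hL) => _ _ hl _ _; case: (hL') => _ _ hl' _ _.
  by rewrite -nth_parts // -nth_parts // hp.
apply: (@eq_from_nth _ set0) => //.
suff H : forall m k, size L - k <= m -> nth set0 L k = nth set0 L' k.
  by move=> k _; apply: (H (size L - k)).
elim=> [|m IH] k hk.
  have h : (size L).-1 <= k by move: hk; rewrite leqn0 subn_eq0 => h; exact: leq_trans (leq_pred _) h.
  by rewrite (lay_last hL h) (lay_last hL') // -hs.
case: (ltnP k (size L).-1) => hk2.
  rewrite (lay_split k hL) (lay_split k hL') hpt IH //.
  move: (hk) (hk2); rewrite subnS; case: (size L) => // s /= h1 h2.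
  by rewrite subSn ?(ltnW h2) // in h1 *.
by rewrite (lay_last hL hk2) (lay_last hL') // -hs.
Qed.

End Tree.

Section Tree3.
Variable V : finType.
Variable par : V -> option V.
Local Notation layering := (layering par).
Local Notation nth := (nth set0).

Lemma mem_layer S L v k : layering S L -> v \in nth L k -> exists m, k <= m /\ v \in pt L m.
Proof.
move=> hL; move: {2}(size L - k) (leqnn (size L - k)) => d; elim: d k => [|d IH] k hk hv.
  have h : (size L).-1 <= k by move: hk; rewrite leqn0 subn_eq0 => h; exact: leq_trans (leq_pred _) h.
  by move: hv; rewrite (lay_last hL h) inE.
case hv1: (v \in nth L k.+1).
  have [|m [h1 h2]] := IH k.+1 _ hv1; first by lia.
  by exists m; split => //; lia.
by exists k; split => //; rewrite /pt inE hv1 hv.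
Qed.

Lemma layer_mem S L v k m : layering S L -> k <= m -> v \in pt L m -> v \in nth L k.
Proof.
move=> hL hkm; rewrite /pt inE => /andP [_ h]; exact: (subsetP (lay_chain hL hkm)).
Qed.

Definition del (L : seq {set V}) j := take j L ++ drop j.+1 L.
Definition ins (L : seq {set V}) i M := take i L ++ M :: drop i L.

Lemma size_del (L : seq {set V}) j : j < size L -> size (del L j) = (size L).-1.
Proof. move=> h; rewrite /del size_cat size_takel ?size_drop; lia. Qed.

Lemma size_ins (L : seq {set V}) i M : i <= size L -> size (ins L i M) = (size L).+1.
Proof. move=> h; rewrite /ins size_cat size_takel //= size_drop; lia. Qed.

Lemma nth_delE L j k : j <= size L -> nth (del L j) k = nth L (if k < j then k else k.+1).
Proof. exact: nth_del. Qed.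

Lemma nth_insE L i M k : i <= size L ->
  nth (ins L i M) k = if k < i then nth L k else if k == i then M else nth L k.-1.
Proof.
move=> h; rewrite /ins nth_ins //; case: ifP => // h1; case: ifP => // h2.
congr nth; lia.
Qed.

Lemma del_deg L j : j.+1 < size L -> nth L j = nth L j.+1 ->
  take j.+1 (del L j) ++ drop j (del L j) = L.
Proof.
move=> hj he; apply: (@eq_from_nth _ set0).
  rewrite size_cat size_takel ?size_drop size_del; lia.
move=> k _; rewrite nth_dup; last by rewrite size_del; lia.
rewrite nth_delE; last by lia.
have [->|hkj] := eqVneq k j; first by rewrite leqnn ltnn he.
by congr nth; case: (leqP k j) => h; case: ifP => h'; lia.
Qed.

Lemma del_lay S L j : layering S L -> 2 < size L -> j.+1 < size L -> nth L j = nth L j.+1 ->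
  layering S (del L j).
Proof.
move=> hL hs hj he; case: (hL) => _ h0 hl hc hlow.
have hd k : nth (del L j) k = nth L (if k < j then k else k.+1) by apply: nth_delE; lia.
split.
- by rewrite size_del; lia.
- by rewrite hd; case: j {hj hd} he => [|j] he /=; rewrite -?he.
- rewrite size_del; last by lia.
  by rewrite hd; case: ifP => h; [lia| apply: (lay_last hL); lia].
- move=> k; rewrite size_del; last by lia.
  move=> hk; rewrite !hd; apply: (lay_chain hL).
  by case: ifP => ?; case: ifP => ?; lia.
- move=> k; rewrite size_del; last by lia.
  by move=> hk; rewrite hd; apply: hlow; case: ifP; lia.
Qed.

Lemma del_parts S L j : layering S L -> j.+1 < size L -> nth L j = nth L j.+1 ->
  parts (del L j) = del (parts L) j.
Proof.
move=> hL hj he; case: (hL) => _ h0 hl hc hlow.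
have hd k : nth (del L j) k = nth L (if k < j then k else k.+1) by apply: nth_delE; lia.
apply: (@eq_from_nth _ set0).
  rewrite size_parts !size_del ?size_parts //; lia.
move=> k _.
have hl' : nth (del L j) (size (del L j)).-1 = set0.
  by rewrite hd; apply: (lay_last hL); rewrite size_del; [case: ifP; lia | lia].
rewrite nth_parts // nth_delE ?size_parts; last by lia.
rewrite nth_parts // /pt !hd.
case: (ltngtP k.+1 j) => h1 //=.
by rewrite -h1 in he; rewrite he.
Qed.

Lemma ins_face L i M : i <= size L -> take i (ins L i M) ++ drop i.+1 (ins L i M) = L.
Proof.
move=> hi; apply: (@eq_from_nth _ set0).
  by rewrite size_cat size_takel ?size_drop size_ins //; lia.
move=> k _; rewrite (@nth_del _ set0); last by rewrite size_ins //; lia.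
case: (ltnP k i) => h1; rewrite nth_insE //; first by rewrite h1.
by rewrite ltnNge (leqW h1) /= gtn_eqF.
Qed.

Lemma ins_lt L i (M : {set V}) k : i <= size L -> k < i -> nth (ins L i M) k = nth L k.
Proof. by move=> h hk; rewrite nth_insE // hk. Qed.
Lemma ins_eq L i (M : {set V}) : i <= size L -> nth (ins L i M) i = M.
Proof. by move=> h; rewrite nth_insE // ltnn eqxx. Qed.
Lemma ins_gt L i (M : {set V}) k : i <= size L -> i < k -> nth (ins L i M) k = nth L k.-1.
Proof. by move=> h hk; rewrite nth_insE // ltnNge (ltnW hk) /= gtn_eqF. Qed.

Lemma ins_lay S L i (M : {set V}) : layering S L -> 0 < i < size L ->
  M \subset nth L i.-1 -> nth L i \subset M -> lowerH par S M -> layering S (ins L i M).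
Proof.
move=> hL /andP [hi1 hi2] hM1 hM2 hlow; case: (hL) => hs h0 hl hc hlo.
have hi := ltnW hi2.
split.
- by rewrite size_ins; lia.
- by rewrite ins_lt.
- rewrite size_ins // ins_gt //=.
- move=> k; rewrite size_ins //.
  move=> hk; case: (ltngtP k i) => h1.
  + have [h2|h2] := ltnP k.+1 i; first by rewrite !ins_lt //; apply: hc; lia.
    have e : k.+1 = i by lia.
    by rewrite (ins_lt _ hi h1) e ins_eq //; move: hM1; rewrite -e.
  + rewrite !ins_gt //; last by lia.
    by case: k h1 hk => // k h1 hk /=; apply: hc; lia.
  + by rewrite h1 ins_eq // ins_gt.
- move=> k; rewrite size_ins // => hk.
  case: (ltngtP k i) => h1.
  + by rewrite ins_lt //; apply: hlo; lia.
  + by rewrite ins_gt //; apply: hlo; lia.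
  + by rewrite h1 ins_eq.
Qed.

Definition mergeP (P : seq {set V}) i := take i.-1 P ++ (nth P i.-1 :|: nth P i) :: drop i.+1 P.

Lemma nth_mergeP P i k : 0 < i <= size P -> nth (mergeP P i) k =
  if k < i.-1 then nth P k else if k == i.-1 then nth P i.-1 :|: nth P i else nth P k.+1.
Proof.
move=> /andP [h1 h2]; rewrite /mergeP nth_ins; last by lia.
case: ifP => // ha; case: ifP => // hb; congr nth; move/negbT: ha; move/negbT: hb; lia.
Qed.

Lemma ins_parts S L i A : layering S L -> 0 < i < size L -> size A = size L ->
  parts L = mergeP A i -> [disjoint nth A i.-1 & nth A i] ->
  parts (ins L i (nth L i :|: nth A i)) = A.
Proof.
move=> hL /andP [hi1 hi2] hsA hp hdis; case: (hL) => hs h0 hl hc hlo.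
set M := _ :|: _.
have hi := ltnW hi2.
have hpt m : pt L m = nth (mergeP A i) m by rewrite -hp nth_parts.
have hm : 0 < i <= size A by rewrite hsA hi1 hi.
have hl' : nth (ins L i M) (size (ins L i M)).-1 = set0.
  by rewrite size_ins // ins_gt //=; apply: (lay_last hL); lia.
apply: (@eq_from_nth _ set0).
  by rewrite size_parts size_ins ?hsA //.
move=> k _; rewrite nth_parts // /pt.
have hA : nth A i \subset pt L i.-1.
  by rewrite hpt nth_mergeP // ltnn eqxx subsetUr.
case: (ltngtP k i) => h1.
- have [h2|h2] := ltnP k.+1 i.
    rewrite !ins_lt //; have := hpt k; rewrite /pt => ->.
    by rewrite nth_mergeP // ifT //; lia.
  have e : k = i.-1 by lia.
  rewrite (ins_lt _ hi h1) (_ : k.+1 = i); last by lia.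
  rewrite ins_eq //.
  have hpi := hpt k; rewrite nth_mergeP // e ltnn eqxx -e in hpi.
  apply/setP => v; move: hpi => /setP /(_ v); rewrite /pt /M !inE.
  rewrite (_ : k.+1 = i); last by lia.
  case hvk: (v \in nth A k).
    have hvi : (v \in nth A i) = false by apply: (disjointFr hdis); rewrite -e.
    by rewrite hvi; case: (v \in nth L i); case: (v \in nth L k).
  by case: (v \in nth A i); case: (v \in nth L i); case: (v \in nth L k).
- rewrite !ins_gt //; last by lia.
  have := hpt k.-1; rewrite /pt (ltn_predK h1) => ->.
  rewrite nth_mergeP // ifF; last by lia.
  by rewrite ifF ?(ltn_predK h1) //; lia.
- rewrite h1 ins_eq // ins_gt //=.
  move/subsetP: hA => hA; apply/setP => v; rewrite /M !inE.
  case hv: (v \in nth A i) => /=; last by rewrite ?andbF ?orbF; case: (v \in nth L i).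
  move: (hA v hv); rewrite /pt inE (ltn_predK hi1) => /andP [h _].
  by rewrite (negbTE h).
Qed.

End Tree3.

Section Tree4.
Variable V : finType.
Variable par : V -> option V.
Local Notation layering := (layering par).
Local Notation nth := (nth set0).
Local Notation Umap := (Umap par).

Lemma iso_forest_refl (x : Tsimp V) : iso_forest par x x id.
Proof.
split => //; first by rewrite imset_id.
  by move=> v _; case: (parH _ _ _).
by move=> i; rewrite imset_id.
Qed.

Lemma iso_graph_refl (x : Gsimp V) : iso_graph par x x id.
Proof.
case: x => [[W E] P]; split => //; first by rewrite imset_id.
by move=> i; rewrite imset_id.
Qed.

Lemma nth_sub_bigcup (P : seq {set V}) k : nth P k \subset \bigcup_(A <- P) A.
Proof.
elim: P k => [|a P IH] [|k] /=; rewrite ?big_nil ?big_cons ?sub0set ?subsetUl //.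
exact: subset_trans (IH k) (subsetUr _ _).
Qed.

Lemma preim_im (f : V -> V) (S B : {set V}) : {in S &, injective f} -> B \subset S ->
  S :&: f @^-1: (f @: B) = B.
Proof.
move=> hf hB; apply/setP => v; rewrite !inE.
case hv: (v \in S) => /=.
  apply/imsetP/idP => [[u hu e]|h]; last by exists v.
  by rewrite (hf v u hv (subsetP hB _ hu) e).
by apply/esym/negbTE; apply: contraFN hv => h; apply: (subsetP hB).
Qed.

Lemma im_preim (f : V -> V) (S B : {set V}) : B \subset f @: S ->
  f @: (S :&: f @^-1: B) = B.
Proof.
move=> hB; apply/setP => v; apply/idP/idP => [/imsetP [u]|hv].
  by rewrite !inE => /andP [_ h] ->.
have /imsetP [u hu e] := subsetP hB v hv.
by apply/imsetP; exists u => //; rewrite !inE hu -e.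
Qed.

Lemma XT_cellS n S L : XT_cell par n.+1 (S, L) <-> [/\ admissible par S, size L = n.+2 & layering S L].
Proof. by []. Qed.

Lemma Umap_inj n x z : XT_cell par n x -> XT_cell par n z -> Umap x = Umap z -> x = z.
Proof.
case: n => [|n]; first by move=> /= -> ->.
case: x => S L; case: z => S' L' /XT_cellS [_ hs hL] /XT_cellS [_ hs' hL'].
rewrite !UmapE => -[e1 _ e3]; subst S'.
by rewrite (lay_eq hL hL') // hs hs'.
Qed.

Lemma XG_cell0 (y : Gsimp V) : XG_cell par 0 y -> y = (set0, set0, [::]).
Proof.
case: y => [[W E] P] [/size0nil -> hsub _]; rewrite big_nil => hW; subst W.
congr (_, _, _); apply/setP => e; rewrite inE; apply/negbTE/negP => /hsub [].
by rewrite inE.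
Qed.

Lemma Eind0 : Eind par set0 = set0.
Proof. by apply/setP => v; rewrite !inE. Qed.

Lemma cell0_of (S : {set V}) L : XT_cell par 1 (S, L) -> S = set0 -> L = [:: set0; set0].
Proof.
move=> /XT_cellS [_ hs hL] hS; case: (hL) => _ h0 hl _ _.
case: L hs h0 hl {hL} => [|a [|b [|]]] //= _ -> -> ; by rewrite hS.
Qed.

Lemma deg_exist n j x' (P : seq {set V}) : j <= n -> XT_cell par n.+1 x' ->
  size P = n -> pt x'.2 j = set0 -> (n = 0 -> x'.1 = set0) ->
  exists x, [/\ XT_cell par n x, XT_deg n j x = x' &
    Umap x = (x'.1, Eind par x'.1, del (parts x'.2) j)].
Proof.
case: x' => S L hj hc hsP hpt hn /=; rewrite /= in hpt hn; move/XT_cellS: (hc) => [hadm hs hL].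
have hsub : nth L j \subset nth L j.+1.
  by move: hpt; rewrite /pt => /eqP; rewrite setD_eq0.
have he : nth L j = nth L j.+1.
  by apply/eqP; rewrite eqEsubset hsub (lay_chain hL (leqnSn _)).
have hjs : j.+1 < size L by lia.
exists (S, del L j); split => //.
- case: n hj hc hs hsP hn {hjs} => [|n] hj hc hs hsP hn.
    rewrite /= (hn erefl); move: hj; rewrite leqn0 => /eqP ->.
    by rewrite (cell0_of hc (hn erefl)).
  apply/XT_cellS; split => //; first by rewrite size_del; lia.
  by apply: del_lay => //; lia.
- by rewrite /= del_deg.
- by rewrite UmapE (del_parts hL).
Qed.

Lemma iso_del S E1 Q W E P j psi : j <= size P ->
  iso_graph par (S, E1, Q) (W, E, ins P j set0) psi ->
  iso_graph par (S, E1, del Q j) (W, E, P) psi.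
Proof.
move=> hj [h1 h2 h3 h4 h5]; split => //.
  by rewrite size_del h4 size_ins //; rewrite h4 size_ins //.
move=> k; rewrite nth_delE; last by rewrite h4 size_ins; lia.
rewrite h5 -{2}(ins_face set0 hj) nth_delE // size_ins //; lia.
Qed.

End Tree4.

Section Tree5.
Variable V : finType.
Variable par : V -> option V.
Local Notation layering := (layering par).
Local Notation nth := (nth set0).
Local Notation Umap := (Umap par).

Definition Apre (S : {set V}) (psi : V -> V) (P : seq {set V}) n :=
  [seq S :&: psi @^-1: nth P k | k <- iota 0 n].

Lemma nth_Apre S psi P n k : size P = n -> nth (Apre S psi P n) k = S :&: psi @^-1: nth P k.
Proof.
move=> hs; case: (ltnP k n) => hk.
  by rewrite (nth_map 0) ?size_iota // nth_iota.
rewrite !nth_default ?size_map ?size_iota //; last by rewrite hs.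
by apply/setP => v; rewrite !inE andbF.
Qed.

Lemma size_Apre S psi P n : size (Apre S psi P n) = n.
Proof. by rewrite size_map size_iota. Qed.

Lemma size_mergeP (P : seq {set V}) i : 0 < i < size P -> size (mergeP P i) = (size P).-1.
Proof. move=> h; rewrite /mergeP size_cat size_takel /= ?size_drop; lia. Qed.

Lemma XG_faceE n i (W E : {set V}) P : 0 < i < n ->
  XG_face par n i (W, E, P) = (W, E, mergeP P i).
Proof. by move=> /andP [h1 h2]; rewrite /XG_face (gtn_eqF h1) (ltn_eqF h2). Qed.

Lemma XT_faceE n i (S : {set V}) L : 0 < i < n ->
  XT_face n i (S, L) = (S, del L i).
Proof. by move=> /andP [h1 h2]; rewrite /XT_face (gtn_eqF h1) (ltn_eqF h2). Qed.

Lemma face_gen n i S L W E P psi :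
  0 < i < n -> XT_cell par n.-1 (S, L) -> XG_cell par n (W, E, P) ->
  iso_graph par (Umap (S, L)) (XG_face par n i (W, E, P)) psi ->
  lowerH par S (nth L i :|: nth (Apre S psi P n) i) ->
  exists x', [/\ XT_cell par n x', XT_face n i x' = (S, L) &
    iso_graph par (Umap x') (W, E, P) psi].
Proof.
move=> hi hx hy hiso hlow.
have [m hm] : exists m, n = m.+2 by move/andP: (hi) => [h1 h2]; exists n.-2; lia.
subst n; move/XT_cellS: hx => [hadm hs hL].
case: hy => hsP hsub hdisP hW.
rewrite XG_faceE // UmapE in hiso; case: hiso => h1 h2 h3 h4 h5.
move/andP: (hi) => [hi1 hi2].
set A := Apre S psi P m.+2.
have hA k : nth A k = S :&: psi @^-1: nth P k by apply: nth_Apre.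
have hsA : size A = size L by rewrite size_Apre hs.
have hlast : nth L (size L).-1 = set0 by case: hL.
have hparts : parts L = mergeP A i.
  apply: (@eq_from_nth _ set0).
    by rewrite size_parts size_mergeP hsA // hs.
  move=> k _; rewrite nth_parts //.
  rewrite -(@preim_im _ psi S (pt L k)) //; last first.
    exact: subset_trans (pt_sub k hL) (lay_sub k hL).
  rewrite -nth_parts // h5 !nth_mergeP ?hsA ?hsP ?hs; try lia.
  case: ifP => _; first by rewrite hA.
  case: ifP => _; last by rewrite hA.
  by rewrite !hA preimsetU setIUr.
have hdis : [disjoint nth A i.-1 & nth A i].
  rewrite disjoint_subset; apply/subsetP => v; rewrite !hA !inE => /andP [hv1 hv2].
  rewrite hv1 /=; apply/negbT; apply: (disjointFr (hdisP i.-1 i _ _)) => //; lia.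
have hAi : nth A i \subset pt L i.-1.
  by rewrite -nth_parts // hparts nth_mergeP ?hsA ?hs ?ltnn ?eqxx ?subsetUr //; lia.
set M := nth L i :|: nth A i.
exists (S, ins L i M); split.
- apply/XT_cellS; split => //; first by rewrite size_ins hs //; lia.
  apply: ins_lay => //; first by rewrite hs.
  + rewrite subUset (lay_chain hL (leq_pred _)) /=.
    exact: subset_trans hAi (pt_sub i.-1 hL).
  + exact: subsetUl.
- by rewrite XT_faceE // /del ins_face // hs; lia.
- rewrite UmapE (ins_parts hL _ hsA hparts hdis); last by rewrite hs.
  split => //.
    by rewrite hsA hs.
  move=> k; rewrite hA im_preim // h2 hW; exact: nth_sub_bigcup.
Qed.

End Tree5.

Section Tree6.
Variable V : finType.
Variable par : V -> option V.
Local Notation layering := (layering par).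
Local Notation nth := (nth set0).
Local Notation Umap := (Umap par).

Lemma XG_degE n j (W E : {set V}) P : XG_deg n j (W, E, P) = (W, E, ins P j set0).
Proof. by []. Qed.

Lemma iso_id (W E W' E' : {set V}) Q P : iso_graph par (W, E, Q) (W', E', P) id ->
  W = W' /\ Q = P.
Proof.
case=> _ h2 _ h4 h5; rewrite imset_id in h2; split => //.
apply: (@eq_from_nth _ set0) => // k _; by rewrite -h5 imset_id.
Qed.

Lemma lab_CULF : (forall v w : V, v = w) -> CULF (XT_lab par) (XG_lab par) Umap.
Proof.
move=> hall; split.
- move=> n j hj x' [[W E] P] hx' hy /=.
  change (take j P ++ set0 :: drop j P) with (ins P j set0).
  rewrite /= in hx' hy.
  case: x' hx' => S L hx'; rewrite UmapE => -[eS eE ep]; subst W E.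
  have hcy := hy; case: hy => hsP _ _ hW.
  have hpt : pt L j = set0.
    have hl : nth L (size L).-1 = set0 by move/XT_cellS: (hx') => [_ _ []].
    by rewrite -nth_parts // ep ins_eq // hsP.
  have hn : n = 0 -> S = set0.
    by move=> e; rewrite e in hsP; move: hsP hW => /size0nil ->; rewrite big_nil.
  have [x [hx hdeg hU]] := deg_exist (P:=P) hj hx' hsP hpt hn.
  exists x; split => //.
    by rewrite hU /= ep /del ins_face // hsP.
  move=> z hz _ hzU; apply: (Umap_inj hz hx).
  by rewrite hzU hU /= ep /del ins_face // hsP.
- move=> n i hi x [[W E] P] hx hy e.
  change (Umap x = XG_face par n i (W, E, P)) in e.
  change (XG_cell par n (W, E, P)) in hy; change (XT_cell par n.-1 x) in hx.
  have [m hm] : exists m, n = m.+2 by move/andP: (hi) => [h1 h2]; exists n.-2; lia.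
  subst n; case: x hx e => S L hx e.
  have hiso : iso_graph par (Umap (S, L)) (XG_face par m.+2 i (W, E, P)) id.
    by rewrite e; exact: iso_graph_refl.
  have hlow : lowerH par S (nth L i :|: nth (Apre S id P m.+2) i).
    by move=> v w hw _; rewrite (hall v w).
  have [x' [hx' hf hiso']] := face_gen hi hx hy hiso hlow.
  have ex' : Umap x' = (W, E, P).
    move: hf hiso'; case: x' hx' => S' L' hx'; rewrite XT_faceE // => -[-> _].
    rewrite UmapE => /iso_id [<- ->]; congr (_, _, _).
    by move: e; rewrite XG_faceE // UmapE => -[_ ->].
  exists x'; split => //.
  move=> z hz _ hzU; apply: (Umap_inj hz hx'); by rewrite hzU ex'.
Qed.

Definition CIprop := forall n z x y a b, XT_cell par n z -> XT_cell par n x ->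
  iso_graph par (Umap z) y a -> iso_graph par (Umap x) y b -> exists phi, iso_forest par z x phi.

Definition FaceProp := forall n i x y psi, 0 < i < n -> XT_cell par n.-1 x -> XG_cell par n y ->
  iso_graph par (Umap x) (XG_face par n i y) psi ->
  exists x', [/\ XT_cell par n x', (exists phi, iso_forest par (XT_face n i x') x phi) &
    (exists a, iso_graph par (Umap x') y a)].

Lemma unl_CULF : CIprop -> FaceProp -> CULF (XT_unl par) (XG_unl par) Umap.
Proof.
move=> hCI hF; split.
- move=> n j hj x' [[W E] P] hx' hy /= [psi hiso]; move: hiso.
  change (take j P ++ set0 :: drop j P) with (ins P j set0).
  rewrite /= in hx' hy.
  case: x' hx' => S L hx'; rewrite UmapE => hiso.
  have hcy := hy; case: hy => hsP _ _ hW.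
  have hl : nth L (size L).-1 = set0 by move/XT_cellS: (hx') => [_ _ []].
  have hpt : pt L j = set0.
    case: (hiso) => _ _ _ _ /(_ j); rewrite ins_eq ?hsP // nth_parts //.
    by move/eqP; rewrite imset_eq0 => /eqP.
  have hn : n = 0 -> S = set0.
    move=> e; rewrite e in hsP; move: hsP hW => /size0nil -> ; rewrite big_nil => hW.
    by case: hiso => _; rewrite hW => /eqP; rewrite imset_eq0 => /eqP.
  have [x [hx hdeg hU]] := deg_exist (P:=P) hj hx' hsP hpt hn.
  have hisox : iso_graph par (Umap x) (W, E, P) psi by rewrite hU; apply: iso_del => //; rewrite hsP.
  exists x; split => //.
  + by exists id; rewrite hdeg; apply: iso_forest_refl.
  + by exists psi.
  + by move=> z hz _ [a ha]; apply: (hCI _ _ _ _ _ _ hz hx ha hisox).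
- move=> n i hi x y hx hy /= [psi hiso].
  have [x' [hx' hf [a ha]]] := hF _ _ _ _ _ hi hx hy hiso.
  exists x'; split => //; first by exists a.
  by move=> z hz _ [b hb]; apply: (hCI _ _ _ _ _ _ hz hx' hb ha).
Qed.

End Tree6.

Section Tree7.
Variable V : finType.
Variable par : V -> option V.
Hypothesis Htree : is_rooted_tree par.
Local Notation nth := (nth set0).
Local Notation Umap := (Umap par).

Lemma root_ex : exists r, par r = None /\ forall v, par v = None -> v = r.
Proof.
case: Htree => [[r [hr hu]] _]; exists r; split => // v hv; exact/esym/hu.
Qed.

Lemma no_2cycle v p : par v = Some p -> par p = Some v -> False.
Proof.
move=> h1 h2; case: Htree => _ /(_ v) [k].
suff : iter k (fun o => obind par o) (Some v) \in [:: Some v; Some p].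
  by rewrite !inE => /orP [] /eqP ->.
elim: k => [|k IH] /=; first by rewrite inE eqxx.
by move: IH; rewrite !inE => /orP [] /eqP -> /=; rewrite ?h1 ?h2 eqxx ?orbT.
Qed.

Lemma no_loop v : par v <> Some v.
Proof. by move=> h; apply: (no_2cycle h h). Qed.

Lemma adj_par u w : par u = Some w -> adjE par (Eind par setT) w u.
Proof. by move=> h; apply/orP; right; rewrite !inE h /= ?inE eqxx. Qed.
Lemma adj_par' u w : par u = Some w -> adjE par (Eind par setT) u w.
Proof. by move=> h; apply/orP; left; rewrite !inE h /= ?inE eqxx. Qed.

Lemma adj_irr m : adjE par (Eind par setT) m m = false.
Proof.
rewrite /adjE; case e: (par m == Some m); last by rewrite !andbF.
by move/eqP: e => /no_loop.
Qed.

Lemma small_struct : nedges par <= 1 -> exists r, par r = None /\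
  ((forall v, v = r) \/ exists c, [/\ c != r, par c = Some r & forall v, v = r \/ v = c]).
Proof.
move=> hn; have [r [hr hu]] := root_ex; exists r; split => //.
case: (boolP [exists v, par v != None]) => [/existsP [c hc]|hno].
  right; exists c.
  have hc' v : par v != None -> v = c.
    move=> hv; move: hn; rewrite /nedges => /card_le1_eqP H.
    by apply: H; rewrite inE.
  have hcr : c != r by apply: contraNneq hc => ->; rewrite hr.
  case e: (par c) hc => [p|] // _.
  have hp : p = r.
    apply: hu; case e2: (par p) => [q|] //.
    have := hc' p; rewrite e2 => /(_ isT) hpc; subst p.
    by move: e => /no_loop.
  subst p; split => // v.
  case e3: (par v) => [q|]; last by left; apply: hu.
  by right; apply: hc'; rewrite e3.
left => v; apply: hu; apply/eqP; apply: contraNT hno => h.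
by apply/existsP; exists v.
Qed.

Lemma big_struct : 1 < nedges par -> exists m n1 n2, [/\ n1 != n2,
  adjE par (Eind par setT) m n1 & adjE par (Eind par setT) m n2].
Proof.
move=> hn; have [r [hr hu]] := root_ex.
move: hn; rewrite /nedges => /card_gt1P [a [b []]]; rewrite !inE => ha hb hab.
case ea: (par a) ha => [pa|] // _; case eb: (par b) hb => [pb|] // _.
case eq1: (par pa) => [q|].
  exists pa, a, q; split; [|exact: adj_par|exact: adj_par'].
  by apply/eqP => e; subst q; apply: (no_2cycle ea eq1).
case eq2: (par pb) => [q|].
  exists pb, b, q; split; [|exact: adj_par|exact: adj_par'].
  by apply/eqP => e; subst q; apply: (no_2cycle eb eq2).
have e1 := hu _ eq1; have e2 := hu _ eq2; subst pa pb.
by exists r, a, b; split => //; exact: adj_par.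
Qed.

Lemma lab_struct : #|V| != 1 -> exists c p, par c = Some p.
Proof.
move=> hV; have [r [hr hu]] := root_ex.
case: (boolP [exists v, v != r]) => [/existsP [v hv]|hno].
  case e: (par v) => [p|]; first by exists v, p.
  by move: hv; rewrite (hu _ e) eqxx.
exfalso; move: hV; rewrite -cardsT (_ : [set: V] = [set r]) ?cards1 //.
apply/setP => v; rewrite !inE; apply/esym/eqP; apply/eqP; apply: contraNT hno => h.
by apply/existsP; exists v.
Qed.

End Tree7.

Section Tree8.
Variable V : finType.
Variable par : V -> option V.
Hypothesis Htree : is_rooted_tree par.
Local Notation nth := (nth set0).
Local Notation Umap := (Umap par).

Definition xcex : Tsimp V := (setT, [:: setT; set0]).
Definition ym (m : V) : Gsimp V := (setT, Eind par setT, [:: [set m]; ~: [set m]]).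

Lemma lay0 : layering par setT [:: setT; set0].
Proof.
split => //.
- by case=> [|[]] //= _; rewrite sub0set.
- case=> [|[]] //= _; first by move=> v w _ _; rewrite inE.
  by move=> v w; rewrite inE.
Qed.

Lemma x0_cell : XT_cell par 1 xcex.
Proof.
split => //; last exact: lay0.
exists [:: setT; set0]; split; first exact: lay0.
by exists 0, 1; split => //=; rewrite setD0.
Qed.

Lemma ym_cell m : XG_cell par 2 (ym m).
Proof.
split => //.
- by move=> e; rewrite !inE; case: (par e) => // p _; split => //; exists p; rewrite inE.
- move=> i j hij hj.
  have [-> ->] : i = 0 /\ j = 1 by lia.
  by rewrite /= disjoint_subset; apply/subsetP => v; rewrite !inE => ->.
- by rewrite !big_cons big_nil setU0 setUCr.
Qed.

Lemma face_ym m : XG_face par 2 1 (ym m) = Umap xcex.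
Proof. by rewrite XG_faceE // /xcex UmapE /mergeP /parts /= setD0 setUCr. Qed.

Lemma core0 S L u w : XT_cell par 2 (S, L) -> par u = Some w -> w \in S ->
  u \in nth L 1 -> w \notin nth L 1 -> False.
Proof.
move/XT_cellS => [_ hs [_ _ _ _ hlow]] hu hw hu1; apply/negP/negPn.
apply: (hlow 1 _ w u hu1); first by rewrite hs.
by exists 1; rewrite /= /parH hu hw.
Qed.

Lemma cell2_shape S L : XT_cell par 2 (S, L) -> exists L1, L = [:: S; L1; set0].
Proof.
move/XT_cellS => [_ hs [_ h0 hl _ _]].
case: L hs h0 hl => [|a [|b [|c [|]]]] //= _ -> ->; by exists b.
Qed.

Lemma core_lab x' m c : XT_cell par 2 x' -> Umap x' = ym m -> par c = Some m -> False.
Proof.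
case: x' => S L hx; have [L1 e] := cell2_shape hx; subst L.
rewrite UmapE /ym /parts /= => -[eS _ h1 h2]; subst S.
rewrite setD0 in h2 => hc.
apply: (core0 hx hc); rewrite /= ?h2 !inE ?eqxx //.
by apply/eqP => e; subst c; apply: (no_loop Htree hc).
Qed.

Lemma core_unl x' m n1 n2 psi : n1 != n2 -> adjE par (Eind par setT) m n1 ->
  adjE par (Eind par setT) m n2 -> XT_cell par 2 x' -> iso_graph par (Umap x') (ym m) psi -> False.
Proof.
move=> hn hm1 hm2; case: x' => S L hx; have [L1 e] := cell2_shape hx; subst L.
rewrite UmapE /ym /parts /= => -[hinj himg hadj _ hnth].
have h0 := hnth 0; have h1 := hnth 1; rewrite /= setD0 in h0 h1.
have : m \in [set psi x | x in S :\: L1] by rewrite h0 inE.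
case/imsetP => m' hm' em; move: hm'; rewrite inE => /andP [hm'1 hm'S].
have hn1 : n1 \in [set psi x | x in S] by rewrite himg inE.
have hn2 : n2 \in [set psi x | x in S] by rewrite himg inE.
case/imsetP: hn1 => u1 hu1 e1; case/imsetP: hn2 => u2 hu2 e2.
have ha1 := hadj m' u1 hm'S hu1; have ha2 := hadj m' u2 hm'S hu2.
rewrite -em -e1 hm1 in ha1; rewrite -em -e2 hm2 in ha2.
have hL1 u : u \in S -> psi u != m -> u \in L1.
  move=> hu hne; case: (boolP (u \in L1)) => // hnot.
  have : psi u \in [set psi x | x in S :\: L1] by apply/imsetP; exists u => //; rewrite inE hnot.
  by rewrite h0 inE (negbTE hne).
have hne1 : psi u1 != m by rewrite -e1; apply: contraTneq hm1 => ->; rewrite adj_irr.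
have hne2 : psi u2 != m by rewrite -e2; apply: contraTneq hm2 => ->; rewrite adj_irr.
move: ha1 ha2; rewrite /adjE !inE.
case: (boolP (par u1 == Some m')) => [/eqP hc _ _|_].
  by apply: (core0 hx hc hm'S) => //=; apply: hL1.
case: (boolP (par u2 == Some m')) => [/eqP hc _ _|_].
  by apply: (core0 hx hc hm'S) => //=; apply: hL1.
rewrite !andbF !orbF => /andP [_ /eqP p1] /andP [_ /eqP p2].
move: hn; rewrite e1 e2; rewrite p1 in p2; case: p2 => ->; by rewrite eqxx.
Qed.

End Tree8.

Section Tree9.
Variable V : finType.
Variable par : V -> option V.
Local Notation layering := (layering par).
Local Notation nth := (nth set0).
Local Notation Umap := (Umap par).

Lemma face_facts n i S L W E P psi :
  0 < i < n -> XT_cell par n.-1 (S, L) -> XG_cell par n (W, E, P) ->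
  iso_graph par (Umap (S, L)) (XG_face par n i (W, E, P)) psi ->
  let A := Apre S psi P n in
  [/\ layering S L, size L = n, parts L = mergeP A i,
      forall k, psi @: nth A k = nth P k & {in S &, injective psi}].
Proof.
move=> hi hx hy hiso.
have [m hm] : exists m, n = m.+2 by move/andP: (hi) => [h1 h2]; exists n.-2; lia.
subst n; move/XT_cellS: hx => [hadm hs hL].
case: hy => hsP hsub hdisP hW.
rewrite XG_faceE // UmapE in hiso; case: hiso => h1 h2 h3 h4 h5.
move/andP: (hi) => [hi1 hi2].
move=> A.
have hA k : nth A k = S :&: psi @^-1: nth P k by apply: nth_Apre.
have hsA : size A = size L by rewrite size_Apre hs.
have hlast : nth L (size L).-1 = set0 by case: hL.
split => //.
  apply: (@eq_from_nth _ set0).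
    by rewrite size_parts size_mergeP hsA // hs.
  move=> k _; rewrite nth_parts //.
  rewrite -(@preim_im _ psi S (pt L k)) //; last first.
    exact: subset_trans (pt_sub k hL) (lay_sub k hL).
  rewrite -nth_parts // h5 !nth_mergeP ?hsA ?hsP ?hs; try lia.
  case: ifP => _; first by rewrite hA.
  case: ifP => _; last by rewrite hA.
  by rewrite !hA preimsetU setIUr.
move=> k; rewrite hA im_preim // h2 hW; exact: nth_sub_bigcup.
Qed.

Lemma img_layer S L W E P a j u : layering S L ->
  iso_graph par (S, Eind par S, parts L) (W, E, P) a ->
  (u \in a @: nth L j) <-> exists m, j <= m /\ u \in nth P m.
Proof.
move=> hL [_ _ _ _ h5]; have hl : nth L (size L).-1 = set0 by case: hL.
split.
  case/imsetP => v hv ->; have [m [hm hv']] := mem_layer hL hv.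
  by exists m; split => //; rewrite -h5 nth_parts //; apply/imsetP; exists v.
case=> m [hm]; rewrite -h5 nth_parts // => /imsetP [v hv ->].
by apply/imsetP; exists v => //; apply: (layer_mem hL hm).
Qed.

Lemma leH_root S r v k : par r = None -> iter k.+1 (fun o => obind (parH par S) o) (Some r) = Some v -> False.
Proof.
move=> hr; rewrite iterSr /= /parH hr.
suff -> : forall l, iter l (fun o => obind (parH par S) o) None = None by [].
by elim=> //= l ->.
Qed.

Lemma leH_in S v w k : iter k.+1 (fun o => obind (parH par S) o) (Some w) = Some v -> v \in S.
Proof.
rewrite iterS; case: (iter k _ _) => //= u; rewrite /parH.
by case: (par u) => // p; case: ifP => // hp [<-].
Qed.

End Tree9.

Section Tree10.
Variable V : finType.
Variable par : V -> option V.
Local Notation layering := (layering par).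
Local Notation nth := (nth set0).
Local Notation Umap := (Umap par).

Hypothesis Hloop : forall v, par v <> Some v.
Hypothesis Hle2 : #|V| <= 2.
Hypothesis Hlow2 : forall A B : {set V}, lowerH par setT A -> lowerH par setT B -> #|A| = #|B| -> A = B.

Lemma card_img (S X : {set V}) (a : V -> V) : {in S &, injective a} -> X \subset S -> #|a @: X| = #|X|.
Proof. by move=> h hX; apply: card_in_imset; apply: sub_in2 h => v; apply: (subsetP hX). Qed.

Lemma eq_full (S : {set V}) : #|S| = #|V| -> S = setT.
Proof. by move=> h; apply/eqP; rewrite eqEcard subsetT cardsT h leqnn. Qed.

Lemma layer_low S L k : layering S L -> lowerH par S (nth L k).
Proof.
move=> hL; case: (ltnP k (size L)) => hk; first by case: hL => _ _ _ _; apply.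
by rewrite nth_default // => v w; rewrite inE.
Qed.

Lemma CI_gen : CIprop par.
Proof.
move=> n z x y a b; case: n => [|n].
  by move=> /= -> ->; exists id; apply: iso_forest_refl.
case: z => Sz Lz; case: x => Sx Lx; case: y => [[W E] P].
move=> /XT_cellS [_ hsz hLz] /XT_cellS [_ hsx hLx] ha hb.
have hLeq j : #|nth Lz j| = #|nth Lx j|.
  have e : a @: nth Lz j = b @: nth Lx j.
    apply/setP => u; apply/idP/idP => h.
      by apply/(img_layer j u hLx hb); apply/(img_layer j u hLz ha).
    by apply/(img_layer j u hLz ha); apply/(img_layer j u hLx hb).
  case: ha => ha1 _ _ _ _; case: hb => hb1 _ _ _ _.
  by rewrite -(card_img ha1 (lay_sub j hLz)) -(card_img hb1 (lay_sub j hLx)) e.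
have hSeq : #|Sz| = #|Sx|.
  case: hLz => _ h0z _ _ _; case: hLx => _ h0x _ _ _.
  by have := hLeq 0; rewrite h0z h0x.
have hcV : #|Sz| <= 2 by apply: leq_trans Hle2; apply: max_card.
have hLL : (forall j, nth Lz j = nth Lx j) -> Lz = Lx.
  by move=> h; apply: (@eq_from_nth _ set0); rewrite ?hsz ?hsx // => j _; apply: h.
case: (ltngtP #|Sz| 1) => h1.
-
  have ez : Sz = set0 by apply: cards0_eq; lia.
  have ex : Sx = set0 by apply: cards0_eq; lia.
  subst Sz Sx; exists id; rewrite (hLL _); first exact: iso_forest_refl.
  move=> j; have := lay_sub j hLz; have := lay_sub j hLx; rewrite !subset0 => /eqP -> /eqP -> //.
-
  have e2 : #|Sz| = 2 by lia.
  have hV : #|V| = 2 by apply/eqP; rewrite eqn_leq Hle2 -e2 max_card.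
  have ez : Sz = setT by apply: eq_full; rewrite e2 hV.
  have ex : Sx = setT by apply: eq_full; rewrite -hSeq e2 hV.
  subst Sz Sx; exists id; rewrite (hLL _); first exact: iso_forest_refl.
  by move=> j; apply: Hlow2; [apply: (layer_low (k:=j) hLz) | apply: (layer_low (k:=j) hLx) | apply: hLeq].
-
  move/eqP/cards1P: (h1) => [p ep]; move: hSeq; rewrite h1 => /esym /eqP /cards1P [q eq].
  subst Sz Sx; exists (fun _ => q); split => //=.
  + by move=> u v; rewrite !inE => /eqP -> /eqP ->.
  + by rewrite (_ : [set q | _ in [set p]] = [set q]) // imset_set1.
  + move=> v; rewrite inE => /eqP ->; rewrite /parH.
    have np u w : par u = Some w -> (w \in [set u]) = false.
      by move=> hu; apply/negbTE/negP; rewrite inE => /eqP e; subst w; exact: (Hloop hu).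
    case ep': (par p) => [p'|]; case eq': (par q) => [q'|] //=; by rewrite ?(np _ _ ep') ?(np _ _ eq').
  + by rewrite hsz hsx.
  + move=> j; have hz := lay_sub j hLz; have hx := lay_sub j hLx; have hc := hLeq j.
    have : #|nth Lz j| <= 1 by rewrite -(cards1 p); apply: subset_leq_card.
    rewrite leq_eqVlt ltnS leqn0 => /orP [/cards1P [u eu] | /eqP e0].
      move: hc; rewrite eu cards1 => /esym /eqP /cards1P [w ew].
      move: hz hx; rewrite eu ew !sub1set !inE => /eqP -> /eqP ->.
      by rewrite imset_set1.
    by move: hc; rewrite e0 => /esym /cards0_eq ->; rewrite (cards0_eq e0) imset0.
Qed.

End Tree10.

Section TreeB.
Variable V : finType.
Variable par : V -> option V.
Local Notation layering := (layering par).
Local Notation nth := (nth set0).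
Local Notation Umap := (Umap par).

Variables r c : V.
Hypothesis hr : par r = None.
Hypothesis hc : par c = Some r.
Hypothesis hcr : c != r.
Hypothesis hall : forall v, v = r \/ v = c.

Lemma setVB : [set: V] = [set r; c].
Proof. by apply/setP => v; rewrite !inE; case: (hall v) => ->; rewrite eqxx ?orbT. Qed.

Lemma cardVB : #|V| = 2.
Proof. by rewrite -cardsT setVB cards2 eq_sym hcr. Qed.

Lemma set_decomp (X : {set V}) :
  X = (if r \in X then [set r] else set0) :|: (if c \in X then [set c] else set0).
Proof.
apply/setP => v; case: (hall v) => ->.
  by case hrX: (r \in X); case: (c \in X); rewrite !inE ?eqxx ?hrX // eq_sym (negbTE hcr).
by case: (r \in X); case hcX: (c \in X); rewrite !inE ?eqxx ?hcX ?(negbTE hcr) ?orbF.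
Qed.

Lemma card_decomp (X : {set V}) : #|X| = (r \in X) + (c \in X).
Proof.
rewrite {1}(set_decomp X).
case: (r \in X); case: (c \in X); rewrite ?setU0 ?set0U ?cards1 ?cards0 //.
by rewrite cards2 eq_sym hcr.
Qed.

Lemma leH_rc (S : {set V}) : r \in S -> leH par S r c.
Proof. by move=> hS; exists 1; rewrite /= /parH hc hS. Qed.

Lemma leH_small (S : {set V}) v w : leH par S v w -> v = w \/ [/\ v = r, w = c & r \in S].
Proof.
case=> [[|k]]; first by case=> ->; left.
move=> h; have hv := leH_in h.
case: (hall w) => ew; subst w; first by case: (leH_root hr h).
case: (hall v) => ev; subst v; [by right | by left].
Qed.

Lemma lower_crit (S : {set V}) (M : {set V}) : ~~ [&& c \in M, r \notin M & r \in S] -> lowerH par S M.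
Proof.
move=> h v w hw /leH_small [-> //|[ev ew hrS]]; subst v w.
by move: h; rewrite hw hrS andbT negbK.
Qed.

Lemma lower_card (A B : {set V}) : lowerH par setT A -> lowerH par setT B -> #|A| = #|B| -> A = B.
Proof.
move=> hA hB; rewrite !card_decomp.
have iA : c \in A -> r \in A by move=> h; apply: (hA r c h); apply: leH_rc; rewrite inE.
have iB : c \in B -> r \in B by move=> h; apply: (hB r c h); apply: leH_rc; rewrite inE.
move=> e; rewrite (set_decomp A) (set_decomp B); move: iA iB e.
case: (r \in A); case: (c \in A); case: (r \in B); case: (c \in B) => //= iA iB e.
all: try (by have := iA isT); try (by have := iB isT); by move: e.
Qed.

Definition swp (v : V) := if v == r then c else r.

Lemma swpK v : swp (swp v) = v.
Proof.
rewrite /swp; case: (hall v) => ->; rewrite ?eqxx ?(negbTE hcr) ?eqxx //.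
Qed.

Lemma swp_mem (X : {set V}) v : (r \in X) = (c \in X) -> (swp v \in X) = (v \in X).
Proof. by rewrite /swp => e; case: (hall v) => ->; rewrite ?eqxx ?(negbTE hcr). Qed.

Lemma swp_img (X : {set V}) : (r \in X) = (c \in X) -> swp @: X = X.
Proof.
move=> e; apply/setP => v; apply/imsetP/idP => [[u hu ->]|hv].
  by rewrite swp_mem.
by exists (swp v); rewrite ?swpK // swp_mem.
Qed.

Lemma adjE_sym E u v : adjE par E u v = adjE par E v u.
Proof. by rewrite /adjE orbC. Qed.

Lemma adj_swp u v : adjE par (Eind par setT) (swp u) (swp v) = adjE par (Eind par setT) u v.
Proof.
have hrr : adjE par (Eind par setT) r r = false by rewrite /adjE hr /= andbF.
have hcc : adjE par (Eind par setT) c c = false.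
  rewrite /adjE hc; case: eqP => //; last by rewrite andbF.
  by case=> e; move: hcr; rewrite e eqxx.
rewrite /swp; case: (hall u) => ->; case: (hall v) => ->;
  rewrite ?eqxx ?(negbTE hcr) ?hrr ?hcc //; apply: adjE_sym.
Qed.

Lemma FaceB : FaceProp par.
Proof.
move=> n i [S L] [[W E] P] psi hi hx hy hiso.
set A := Apre S psi P n.
set M := nth L i :|: nth A i.
case: (boolP [&& c \in M, r \notin M & r \in S]) => hb; last first.
  have [x' [h1 h2 h3]] := face_gen hi hx hy hiso (lower_crit hb).
  by exists x'; split => //; [exists id; rewrite h2; apply: iso_forest_refl | exists psi].
have [hL hs hparts hAimg hinj] := face_facts hi hx hy hiso.
move/and3P: hb => [hcM hrM hrS].
have [hi1 hi2] := andP hi.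
have hlast : nth L (size L).-1 = set0 by case: hL.
have hsA : size A = n by rewrite size_Apre.
have hpt1 : pt L i.-1 = nth A i.-1 :|: nth A i.
  by rewrite -nth_parts // hparts nth_mergeP ?hsA ?ltnn ?eqxx //; lia.
have hMsub : M \subset nth L i.-1.
  rewrite subUset (lay_chain hL (leq_pred _)) /=.
  by apply: subset_trans (pt_sub i.-1 hL); rewrite hpt1 subsetUr.
have hcS : c \in S by apply: (subsetP (lay_sub i.-1 hL)); apply: (subsetP hMsub).
have hST : S = setT by apply/setP => v; rewrite inE; case: (hall v) => ->.
move: hrM; rewrite inE negb_or => /andP [hrLi hrAi].
have hcLi : c \notin nth L i.
  apply/negP => h; have hlo : lowerH par S (nth L i) := layer_low (k:=i) hL.
  have := hlo r c h (leH_rc hrS).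
  by rewrite (negbTE hrLi).
have hcL1 : c \in nth L i.-1 by apply: (subsetP hMsub).
have hrL1 : r \in nth L i.-1.
  have hlo : lowerH par S (nth L i.-1) := layer_low (k:=i.-1) hL.
  exact: (hlo r c hcL1 (leH_rc hrS)).
have hmemL k : (r \in nth L k) = (c \in nth L k).
  case: (leqP k i.-1) => hk.
    by rewrite (subsetP (lay_chain hL hk) _ hrL1) (subsetP (lay_chain hL hk) _ hcL1).
  have hki : i <= k by lia.
  apply/idP/idP => h; have := subsetP (lay_chain hL hki) _ h.
    by rewrite (negbTE hrLi).
  by rewrite (negbTE hcLi).
have hswppt k : swp @: pt L k = pt L k by apply: swp_img; rewrite /pt !inE !hmemL.
pose psi' := fun v => psi (swp v).
have hiso' : iso_graph par (Umap (S, L)) (XG_face par n i (W, E, P)) psi'.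
  move: hiso; rewrite XG_faceE // UmapE => -[h1 h2 h3 h4 h5]; split => //.
  - move=> u v hu hv e.
    have e' : swp u = swp v by apply: h1 => //; rewrite hST inE.
    by rewrite -(swpK u) e' swpK.
  - by rewrite -h2 (imset_comp psi swp) hST swp_img // !inE.
  - move=> u v hu hv; rewrite -h3 ?hST ?inE // adj_swp //.
  - by move=> k; rewrite -h5 (imset_comp psi swp) nth_parts // hswppt.
have hlow' : lowerH par S (nth L i :|: nth (Apre S psi' P n) i).
  apply: lower_crit; apply/negP => /and3P [h _ _]; move: h.
  rewrite inE (negbTE hcLi) /= nth_Apre; last by case: hy.
  rewrite !inE => /andP [_]; rewrite /psi' /swp (negbTE hcr) -hAimg.
  case/imsetP => u hu e; have huS : u \in S by move: hu; rewrite /A nth_Apre ?inE; [case/andP|case: hy].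
  have := hinj _ _ hrS huS e => eu; subst u.
  by move: hrAi; rewrite hu.
have [x' [h1 h2 h3]] := face_gen hi hx hy hiso' hlow'.
by exists x'; split => //; [exists id; rewrite h2; apply: iso_forest_refl | exists psi'].
Qed.

End TreeB.

Section Main.
Variable V : finType.
Variable par : V -> option V.
Hypothesis Htree : is_rooted_tree par.
Local Notation nth := (nth set0).
Local Notation Umap := (Umap par).

Lemma cex_unl (X : ssetP (Tsimp V)) : scell X = XT_cell par ->
  CULF X (XG_unl par) Umap -> nedges par <= 1.
Proof.
move=> hX [_ hF]; rewrite leqNgt; apply/negP => /(big_struct Htree) [m [n1 [n2 [hn h1 h2]]]].
have hs : seqv (XG_unl par) 1 (Umap (xcex V)) (sface (XG_unl par) 2 1 (ym par m)).
  change (exists phi, iso_graph par (Umap (xcex V)) (XG_face par 2 1 (ym par m)) phi).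
  by exists id; rewrite face_ym; apply: iso_graph_refl.
have := hF 2 1 isT (xcex V) (ym par m); rewrite hX => /(_ (x0_cell par) (ym_cell par m) hs).
case=> x' [hx' _ [psi hpsi] _].
exact: (core_unl Htree hn h1 h2 hx' hpsi).
Qed.

Lemma cex_lab : CULF (XT_lab par) (XG_lab par) Umap -> #|V| = 1.
Proof.
move=> [_ hF]; apply/eqP; apply/negPn/negP => /(lab_struct Htree) [c [p hcp]].
have hs : seqv (XG_lab par) 1 (Umap (xcex V)) (sface (XG_lab par) 2 1 (ym par p)).
  by change (Umap (xcex V) = XG_face par 2 1 (ym par p)); rewrite face_ym.
have [x' [hx' _ e _]] := hF 2 1 isT (xcex V) (ym par p) (x0_cell par) (ym_cell par p) hs.
exact: (core_lab Htree hx' e hcp).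
Qed.

Lemma FaceA (r : V) : (forall v, v = r) -> FaceProp par.
Proof.
move=> hall n i [S L] [[W E] P] psi hi hx hy hiso.
have hlow : lowerH par S (nth L i :|: nth (Apre S psi P n) i).
  by move=> v w hw _; rewrite (hall v) -(hall w).
have [x' [h1 h2 h3]] := face_gen hi hx hy hiso hlow.
by exists x'; split => //; [exists id; rewrite h2; apply: iso_forest_refl | exists psi].
Qed.

Lemma small_CULF : nedges par <= 1 -> CULF (XT_unl par) (XG_unl par) Umap.
Proof.
move=> hn; have [r [hr [hA|[c [hcr hc hB]]]]] := small_struct Htree hn.
- have hV : #|V| = 1.
    by rewrite -cardsT (_ : [set: V] = [set r]) ?cards1 //; apply/setP => v; rewrite !inE (hA v) eqxx.
  apply: unl_CULF; last exact: FaceA hA.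
  apply: CI_gen; first exact: no_loop Htree.
    by rewrite hV.
  have hd (X : {set V}) : X = if r \in X then setT else set0.
    by apply/setP => v; rewrite (hA v); case: ifP => h; rewrite !inE ?h.
  move=> X Y _ _; rewrite (hd X) (hd Y).
  by case: (r \in X); case: (r \in Y); rewrite ?cardsT ?cards0 ?hV.
- apply: unl_CULF; last exact: FaceB hr hc hcr hB.
  apply: CI_gen; first exact: no_loop Htree.
    by rewrite (cardVB hcr hB).
  exact: lower_card hc hcr hB.
Qed.

Lemma parH_some (S : {set V}) u w : parH par S u = Some w -> par u = Some w.
Proof. by rewrite /parH; case: (par u) => // p; case: ifP => // _ [->]. Qed.

Lemma pl_eq po : planar_structure par po ->
  (forall c1 c2 v, par c1 = Some v -> par c2 = Some v -> c1 = c2) ->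
  XT_pl par po = XT_unl par.
Proof.
move=> hpl huniq; rewrite /XT_pl /XT_unl; congr SSetP.
apply: functional_extensionality => n; apply: functional_extensionality => x.
apply: functional_extensionality => y; apply: propositional_extensionality.
split; first by case=> phi [h _]; exists phi.
case=> phi h; exists phi; split => // v c1 c2 hv hc1 hc2 e1 e2.
have p1 := parH_some e1; have p2 := parH_some e2.
have ec := huniq _ _ _ p1 p2; subst c2.
case: h => _ _ hpar _ _.
have hp' : par (phi c1) = Some (phi v).
  by apply: (@parH_some y.1); rewrite hpar // e1.
have [i1 _ _] := hpl v; have [i2 _ _] := hpl (phi v).
by rewrite (negbTE (i1 _ p1)) (negbTE (i2 _ hp')).
Qed.

Lemma small_uniq : nedges par <= 1 -> forall c1 c2 v, par c1 = Some v -> par c2 = Some v -> c1 = c2.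
Proof.
move=> hn c1 c2 v h1 h2; have [r [hr [hA|[c [hcr hc hB]]]]] := small_struct Htree hn.
  by rewrite (hA c1) (hA c2).
case: (hB c1) => e1; first by subst c1; rewrite hr in h1.
case: (hB c2) => e2; first by subst c2; rewrite hr in h2.
by rewrite e1 e2.
Qed.

Theorem main_thm :
  (CULF (XT_lab par) (XG_lab par) Umap <-> #|V| = 1) /\
  (CULF (XT_unl par) (XG_unl par) Umap <-> nedges par <= 1) /\
  (forall po : V -> rel V, planar_structure par po ->
     (CULF (XT_pl par po) (XG_unl par) Umap <-> nedges par <= 1)).
Proof.
split; [|split].
- split; first exact: cex_lab.
  move=> hV; apply: lab_CULF => v w.
  by move/eqP: hV; rewrite eqn_leq => /andP [/fintype_le1P h _]; rewrite (h v) (h w).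
- by split; [apply: cex_unl | apply: small_CULF].
- move=> po hpl; split; first by apply: cex_unl.
  by move=> hn; rewrite (pl_eq hpl (small_uniq hn)); apply: small_CULF.
Qed.

End Main.


Theorem mainTheorem6 (V : finType) (par : V -> option V) :
  is_rooted_tree par ->
  (CULF (XT_lab par) (XG_lab par) (Umap par) <-> #|V| = 1) /\
  (CULF (XT_unl par) (XG_unl par) (Umap par) <-> nedges par <= 1) /\
  (forall po : V -> rel V, planar_structure par po ->
     (CULF (XT_pl par po) (XG_unl par) (Umap par) <-> nedges par <= 1)).
Proof. by move=> h; apply: main_thm. Qed.
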